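(* Let $n\ge2$ and $\mu\in(0,\frac1n(\frac{n-1}{n})^{n-1})$. Let $\mathcal{D}(\mu)\subset\mathbb{R}^{n+1}$ be the Euclidean Delaunay unduloid with profile $f$, normalized so that $f(0)=a_-(\mu)$, and with period $T(\mu)$. Let $$a(x)=(1+f'(x)^2)^{-1/2}f'(x),$$ regarded as a function on $\mathcal{D}(\mu)$. Then: 1. $(\Delta-V)a=0$ on $\mathcal{D}(\mu)$; 2. $a$ vanishes exactly at the points $x=kT(\mu)/2$, $k\in\mathbb{Z}$; 3. $a'$ has exactly two zeros $\zeta_1(\mu),\zeta_2(\mu)$ in $[0,T(\mu)]$, and they satisfy $0<\zeta_1(\mu)<T(\mu)/2<\zeta_2(\mu)<T(\mu)$.
   Context: For $\mu\in(0,\frac1n(\frac{n-1}{n})^{n-1})$, $f$ is a nonconstant positive solution on $\mathbb{R}$ of $\mu=f^{n-1}(1+f'^2)^{-1/2}-f^n$. The unduloid $\mathcal{D}(\mu)$ is parametrized by $F(x,\omega)=(x,f(x)\omega)$, $\omega\in S^{n-1}$; it has constant mean curvature $1$ with respect to the unit normal $N=(1+f'^2)^{-1/2}(f',-\omega)$. The function $f$ oscillates between $a_-(\mu)$ and $a_+(\mu)$, the two positive roots of $X^n-X^{n-1}+\mu=0$. It is $T(\mu)$-periodic, where $T(\mu)$ is the distance between consecutive minima. $\Delta$ is the non-negative Laplace–Beltrami operator of the induced metric, and $V=\|B\|^2=n(1+(n-1)\mu^2f^{-2n})$. Note that $a=\langle N,(1,0,\dots,0)\rangle$. *)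

(* Defs.v *)
From Stdlib Require Import Reals Lra.
From Coquelicot Require Import Coquelicot.
Open Scope R_scope.

Definition delaunay_ode (n : nat) (mu : R) (f : R -> R) : Prop :=
  forall x, mu = f x ^ (n - 1) / sqrt (1 + (Derive f x) ^ 2) - f x ^ n.

Definition is_a_minus (n : nat) (mu am : R) : Prop :=
  0 < am /\ am ^ n - am ^ (n - 1) + mu = 0 /\
  (forall y, 0 < y -> y ^ n - y ^ (n - 1) + mu = 0 -> am <= y).

(* The function a(x) = (1+f'^2)^{-1/2} f', i.e. <N, e_1>. *)
Definition a_fun (f : R -> R) (x : R) : R :=
  Derive f x / sqrt (1 + (Derive f x) ^ 2).

(* Non-negative Laplace-Beltrami operator of the induced metric
   (1+f'^2) dx^2 + f^2 g_{S^{n-1}} on D(mu), applied to a function u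
   depending only on the axial variable x:
   Delta u = - (f^{n-1} sqrt(1+f'^2))^{-1} d/dx ( f^{n-1} u' / sqrt(1+f'^2) ). *)
Definition lap_rad (n : nat) (f u : R -> R) (x : R) : R :=
  - (Derive (fun y => f y ^ (n - 1) * Derive u y / sqrt (1 + (Derive f y) ^ 2)) x)
    / (f x ^ (n - 1) * sqrt (1 + (Derive f x) ^ 2)).

(* V = |B|^2 = n (1 + (n-1) mu^2 f^{-2n}). *)
Definition V_pot (n : nat) (mu : R) (f : R -> R) (x : R) : R :=
  INR n * (1 + (INR n - 1) * mu ^ 2 / f x ^ (2 * n)).

(* Main.v *)
Require Import Defs.
From Stdlib Require Import Reals Lra Lia ZArith Classical.
From Coquelicot Require Import Coquelicot.
Open Scope R_scope.

Lemma deriv_nonpos_decr (g g' : R -> R) :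
  (forall x, is_derive g x (g' x)) -> (forall x, g' x <= 0) ->
  forall x y, x <= y -> g y <= g x.
Proof.
  intros Hd Hp x y Hxy.
  destruct (Rle_lt_or_eq_dec _ _ Hxy) as [Hl|He]; [|subst; lra].
  destruct (MVT_cor2 g g' x y Hl) as [c [Hc1 Hc2]].
  { intros c Hc. apply is_derive_Reals. apply Hd. }
  specialize (Hp c). nra.
Qed.

Lemma gronwall0 (E E' : R -> R) K x0 :
  (forall t, is_derive E t (E' t)) -> (forall t, Rabs (E' t) <= K * E t) ->
  (forall t, 0 <= E t) -> E x0 = 0 -> forall x, E x = 0.
Proof.
  intros HD HB Hp H0 x.
  assert (DE : forall t, Derive (fun x : R => E x) t = E' t).
  { intros t. apply is_derive_unique. apply HD. }
  assert (EE : forall t, ex_derive (fun x : R => E x) t).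
  { intros t. exists (E' t). apply HD. }
  pose proof (Hp x).
  destruct (Rle_or_lt x0 x) as [Hx|Hx].
  - pose (phi := fun t => E t * exp (- K * t)).
    assert (phi x <= phi x0).
    { apply (deriv_nonpos_decr phi (fun t => (E' t - K * E t) * exp (- K * t))); auto.
      - intros t. unfold phi. auto_derive. apply EE. rewrite DE. ring.
      - intros t. specialize (HB t). pose proof (exp_pos (- K * t)).
        apply Rmult_le_0_r; [|lra]. pose proof (Rle_abs (E' t)). lra. }
    unfold phi in H1. rewrite H0 in H1. pose proof (exp_pos (- K * x)). nra.
  - pose (phi := fun t => - (E t * exp (K * t))).
    assert (phi x0 <= phi x).
    { apply (deriv_nonpos_decr phi (fun t => - ((E' t + K * E t) * exp (K * t)))); try lra.
      - intros t. unfold phi. auto_derive. apply EE. rewrite DE. ring.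
      - intros t. specialize (HB t). pose proof (exp_pos (K * t)).
        assert (0 <= (E' t + K * E t) * exp (K * t)); [|lra].
        apply Rmult_le_pos; [|lra]. pose proof (Rle_abs (- E' t)) as HH. rewrite Rabs_Ropp in HH. lra. }
    unfold phi in H1. rewrite H0 in H1. pose proof (exp_pos (K * x)). nra.
Qed.

Lemma deriv_incr_strict (g g' : R -> R) (a b : R) :
  (forall x, a <= x <= b -> is_derive g x (g' x)) ->
  (forall x, a < x < b -> 0 < g' x) ->
  forall x y, a <= x -> x < y -> y <= b -> g x < g y.
Proof.
  intros Hd Hp x y Hx Hxy Hy.
  destruct (MVT_cor2 g g' x y Hxy) as [c [Hc1 Hc2]].
  { intros c Hc. apply is_derive_Reals. apply Hd. lra. }
  assert (0 < g' c) by (apply Hp; lra).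
  assert (0 < g' c * (y - x)) by (apply Rmult_lt_0_compat; lra). lra.
Qed.

Lemma energy_uniq (F : R -> R) (L : R) (y1 y2 : R -> R) (x0 : R) :
  0 <= L ->
  (forall x, Rabs (F (y1 x) - F (y2 x)) <= L * Rabs (y1 x - y2 x)) ->
  (forall x, is_derive y1 x (Derive y1 x)) ->
  (forall x, is_derive (Derive y1) x (F (y1 x))) ->
  (forall x, is_derive y2 x (Derive y2 x)) ->
  (forall x, is_derive (Derive y2) x (F (y2 x))) ->
  y1 x0 = y2 x0 -> Derive y1 x0 = Derive y2 x0 ->
  forall x, y1 x = y2 x.
Proof.
  intros HL HF d1 dd1 d2 dd2 H0 H1 x.
  set (E := fun t => (y1 t - y2 t) ^ 2 + (Derive y1 t - Derive y2 t) ^ 2).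
  set (E' := fun t => 2 * (y1 t - y2 t) * (Derive y1 t - Derive y2 t)
                      + 2 * (Derive y1 t - Derive y2 t) * (F (y1 t) - F (y2 t))).
  assert (HE : forall t, is_derive E t (E' t)).
  { intros t. unfold E, E'. auto_derive.
    - repeat split; eexists; eauto.
    - assert (E1 : Derive (fun x : R => Derive y1 x) t = F (y1 t)) by (apply is_derive_unique; apply dd1).
      assert (E2 : Derive (fun x : R => Derive y2 x) t = F (y2 t)) by (apply is_derive_unique; apply dd2).
      assert (E3 : Derive (fun x : R => y1 x) t = Derive y1 t) by reflexivity.
      assert (E4 : Derive (fun x : R => y2 x) t = Derive y2 t) by reflexivity.
      rewrite E1, E2, E3, E4. ring. }
  assert (HB : forall t, Rabs (E' t) <= (1 + L) * E t).
  { intros t. unfold E', E.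
    specialize (HF t).
    set (d := y1 t - y2 t) in *. set (e := Derive y1 t - Derive y2 t).
    set (D := F (y1 t) - F (y2 t)) in *.
    assert (Rabs (2 * d * e + 2 * e * D) <= 2 * Rabs d * Rabs e + 2 * Rabs e * (L * Rabs d)).
    { eapply Rle_trans; [apply Rabs_triang|].
      rewrite !Rabs_mult. rewrite (Rabs_pos_eq 2) by lra.
      apply Rplus_le_compat_l. apply Rmult_le_compat_l. apply Rmult_le_pos; [lra|apply Rabs_pos]. exact HF. }
    assert (2 * Rabs d * Rabs e <= d^2 + e^2).
    { rewrite <- (pow2_abs d), <- (pow2_abs e). pose proof (pow2_ge_0 (Rabs d - Rabs e)). nra. }
    pose proof (Rabs_pos d). pose proof (Rabs_pos e).
    assert (L * (2 * Rabs d * Rabs e) <= L * (d^2 + e^2)) by (apply Rmult_le_compat_l; lra).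
    nra. }
  assert (HE0 : forall t, E t = 0).
  { apply (gronwall0 E E' (1 + L) x0 HE HB).
    - intros t. unfold E. pose proof (pow2_ge_0 (y1 t - y2 t)). pose proof (pow2_ge_0 (Derive y1 t - Derive y2 t)). lra.
    - unfold E. rewrite H0, H1. ring. }
  specialize (HE0 x). unfold E in HE0.
  pose proof (pow2_ge_0 (y1 x - y2 x)). pose proof (pow2_ge_0 (Derive y1 x - Derive y2 x)).
  assert ((y1 x - y2 x)^2 = 0) by lra. nra.
Qed.

Definition UU (k : nat) (mu y : R) := mu / y ^ (S k) + y.
Definition FF (k : nat) (mu y : R) :=
  (INR (S k) * mu / y ^ (S (S k)) - 1) / (UU k mu y) ^ 3.
Definition DFF (k : nat) (mu y : R) :=
  - (INR (S (S k)) * (INR (S k) * mu) / y ^ (S (S (S k)))) / (UU k mu y) ^ 3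
  + 3 * (INR (S k) * mu / y ^ (S (S k)) - 1) ^ 2 / (UU k mu y) ^ 4.

Lemma UU_pos k mu y : 0 <= mu -> 0 < y -> 0 < UU k mu y.
Proof.
  intros Hm Hy. unfold UU. pose proof (pow_lt y (S k) Hy).
  assert (0 <= mu / y ^ S k) by (apply Rdiv_le_0_compat; lra). lra.
Qed.


Ltac prep k := 
  try change (match k with 0%nat => 1 | S _ => INR k + 1 end) with (INR (S k)) in *;
  try change (match (S k) with 0%nat => 1 | S _ => INR (S k) + 1 end) with (INR (S (S k))) in *;
  rewrite ?S_INR in *; cbn [pow] in *.

Ltac nzs := repeat split; try lra; repeat apply Rmult_integral_contrapositive_currified; lra.

Lemma d_invU2 k mu y : 0 <= mu -> 0 < y ->
  is_derive (fun y => / (UU k mu y) ^ 2) y (2 * FF k mu y).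
Proof.
  intros Hm Hy. pose proof (UU_pos k mu y Hm Hy). pose proof (pow_lt y k Hy).
  unfold FF, UU in *. auto_derive; prep k; set (X := y ^ k) in *.
  - assert (0 < y * X) by (repeat apply Rmult_lt_0_compat; lra). nzs.
  - assert (0 < y * (y * X)) by (repeat apply Rmult_lt_0_compat; lra).
    field. nzs.
Qed.

Lemma d_FF k mu y : 0 <= mu -> 0 < y -> is_derive (FF k mu) y (DFF k mu y).
Proof.
  intros Hm Hy. pose proof (UU_pos k mu y Hm Hy). pose proof (pow_lt y k Hy).
  unfold DFF, FF, UU in *. auto_derive; prep k; set (X := y ^ k) in *.
  - assert (0 < y * X) by (repeat apply Rmult_lt_0_compat; lra). nzs.
  - assert (0 < y * (y * X)) by (repeat apply Rmult_lt_0_compat; lra).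
    field. nzs.
Qed.

Lemma cont_DFF k mu y : 0 <= mu -> 0 < y -> continuity_pt (DFF k mu) y.
Proof.
  intros Hm Hy. apply continuity_pt_filterlim. apply (ex_derive_continuous (DFF k mu)).
  pose proof (UU_pos k mu y Hm Hy). pose proof (pow_lt y k Hy).
  unfold DFF, FF, UU in *. auto_derive; prep k; set (X := y ^ k) in *.
  assert (0 < y * X) by (repeat apply Rmult_lt_0_compat; lra). nzs.
Qed.

Lemma FF_lip k mu A B : 0 <= mu -> 0 < A -> A <= B ->
  exists L, 0 <= L /\ forall a b, A <= a <= B -> A <= b <= B ->
    Rabs (FF k mu a - FF k mu b) <= L * Rabs (a - b).
Proof.
  intros Hm HA HAB.
  destruct (continuity_ab_maj (fun y => Rabs (DFF k mu y)) A B HAB) as [M [HM HMi]].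
  { intros c Hc. apply (continuity_pt_comp (DFF k mu) Rabs).
    - apply cont_DFF; lra.
    - apply Rcontinuity_abs. }
  exists (Rabs (DFF k mu M)). split; [apply Rabs_pos|].
  assert (key : forall a b, A <= a <= B -> A <= b <= B -> a < b ->
     Rabs (FF k mu a - FF k mu b) <= Rabs (DFF k mu M) * Rabs (a - b)).
  { intros a b Ha Hb Hab.
    destruct (MVT_cor2 (FF k mu) (DFF k mu) a b Hab) as [c [Hc1 Hc2]].
    { intros c Hc. apply is_derive_Reals. apply d_FF; lra. }
    rewrite <- Rabs_Ropp. replace (- (FF k mu a - FF k mu b)) with (FF k mu b - FF k mu a) by ring.
    rewrite Hc1, Rabs_mult. rewrite (Rabs_minus_sym a b).
    apply Rmult_le_compat_r; [apply Rabs_pos|]. apply HM. lra. }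
  intros a b Ha Hb.
  destruct (Rtotal_order a b) as [H|[H|H]].
  - apply key; auto.
  - subst. rewrite !Rminus_diag, Rabs_R0. rewrite Rmult_0_r. lra.
  - rewrite (Rabs_minus_sym a b), (Rabs_minus_sym (FF k mu a)). apply key; auto.
Qed.

Lemma per_nat (g : R -> R) T : (forall x, g (x + T) = g x) ->
  forall (j : nat) x, g (x + INR j * T) = g x.
Proof.
  intros Hg j. induction j as [|j IH]; intros x.
  - simpl. f_equal. ring.
  - rewrite S_INR. replace (x + (INR j + 1) * T) with ((x + INR j * T) + T) by ring.
    rewrite Hg. apply IH.
Qed.

Lemma per_Z (g : R -> R) T : (forall x, g (x + T) = g x) ->
  forall (j : Z) x, g (x + IZR j * T) = g x.
Proof.
  intros Hg j x. destruct j as [|p|p].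
  - simpl. f_equal. ring.
  - rewrite <- positive_nat_Z, <- INR_IZR_INZ. apply per_nat; auto.
  - rewrite <- (per_nat g T Hg (Pos.to_nat p) (x + IZR (Z.neg p) * T)).
    f_equal. rewrite <- Pos2Z.opp_pos, opp_IZR, <- positive_nat_Z, <- INR_IZR_INZ. ring.
Qed.

Lemma floorT T x : 0 < T -> exists j : Z, IZR j * T <= x < IZR j * T + T.
Proof.
  intros HT. destruct (archimed (x / T)) as [H1 H2].
  exists (up (x / T) - 1)%Z. rewrite minus_IZR.
  assert (x = (x / T) * T) by (field; lra).
  split.
  - rewrite H at 2. apply Rmult_le_compat_r; lra.
  - replace ((IZR (up (x / T)) - 1) * T + T) with (IZR (up (x / T)) * T) by ring.
    rewrite H at 1. apply Rmult_lt_compat_r; lra.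
Qed.

Lemma pow_lt_l (x y : R) (k : nat) : 0 <= x -> x < y -> x ^ S k < y ^ S k.
Proof.
  intros Hx Hxy. induction k as [|k IH].
  - simpl. lra.
  - change (x ^ S (S k)) with (x * x ^ S k). change (y ^ S (S k)) with (y * y ^ S k).
    pose proof (pow_le x (S k) Hx). apply Rmult_le_0_lt_compat; auto.
Qed.

Definition PP (k : nat) (mu y : R) := y ^ S (S k) - y ^ S k + mu.

Lemma PP_deriv k mu y : is_derive (PP k mu) y (y ^ k * (INR (S (S k)) * y - INR (S k))).
Proof.
  unfold PP. auto_derive; auto. prep k. ring.
Qed.

Lemma PP_roots k mu r s : 0 < r -> 0 < s -> r <> s -> PP k mu r = 0 -> PP k mu s = 0 ->
  let c0 := INR (S k) / INR (S (S k)) in (r < c0 < s) \/ (s < c0 < r).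
Proof.
  intros Hr Hs Hrs Pr Ps c0.
  assert (Hn : 0 < INR (S (S k))) by (apply lt_0_INR; lia).
  assert (dec : forall x y, 0 < x -> x < y -> y <= c0 -> PP k mu y < PP k mu x).
  { intros x y Hx Hxy Hy.
    assert (- PP k mu x < - PP k mu y); [|lra].
    apply (deriv_incr_strict (fun y => - PP k mu y) (fun y => - (y ^ k * (INR (S (S k)) * y - INR (S k)))) x c0); try lra.
    - intros t Ht. apply (is_derive_opp (PP k mu)). apply PP_deriv.
    - intros t Ht. assert (0 < t ^ k) by (apply pow_lt; lra).
      assert (INR (S (S k)) * t < INR (S k)).
      { assert (t < c0) by lra. unfold c0 in H0.
        apply (Rmult_lt_compat_l (INR (S (S k)))) in H0; auto.
        field_simplify in H0; lra. }
      nra. }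
  assert (inc : forall x y, c0 <= x -> x < y -> PP k mu x < PP k mu y).
  { intros x y Hx Hxy.
    apply (deriv_incr_strict (PP k mu) (fun y => (y ^ k * (INR (S (S k)) * y - INR (S k)))) x y); try lra.
    - intros t Ht. apply PP_deriv.
    - intros t Ht.
      assert (0 < c0) by (unfold c0; apply Rdiv_lt_0_compat; auto; apply lt_0_INR; lia).
      assert (0 < t ^ k) by (apply pow_lt; lra).
      assert (INR (S k) < INR (S (S k)) * t).
      { assert (c0 < t) by lra. unfold c0 in H1.
        apply (Rmult_lt_compat_l (INR (S (S k)))) in H1; auto.
        field_simplify in H1; lra. }
      nra. }
  destruct (Rtotal_order r s) as [H|[H|H]]; [|contradiction|].
  - left. destruct (Rle_or_lt s c0) as [H1|H1].
    + specialize (dec r s Hr H H1). lra.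
    + split; auto. destruct (Rle_or_lt c0 r) as [H2|H2]; auto.
      specialize (inc r s H2 H). lra.
  - right. destruct (Rle_or_lt r c0) as [H1|H1].
    + specialize (dec s r Hs H H1). lra.
    + split; auto. destruct (Rle_or_lt c0 s) as [H2|H2]; auto.
      specialize (inc s r H2 H). lra.
Qed.

Lemma root_U k mu r : 0 < r -> PP k mu r = 0 -> UU k mu r = 1.
Proof.
  intros Hr P. unfold PP, UU in *. pose proof (pow_lt r (S k) Hr).
  change (r ^ S (S k)) with (r * r ^ S k) in P.
  assert (mu = r ^ S k * (1 - r)) by lra. rewrite H0. field. lra.
Qed.

Lemma root_FF k mu r : 0 < r -> PP k mu r = 0 -> FF k mu r = INR (S k) * mu / r ^ S (S k) - 1.
Proof.
  intros Hr P. unfold FF. rewrite root_U; auto. field. apply pow_nonzero; lra.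
Qed.

Lemma root_cmp k mu r : 0 < r -> PP k mu r = 0 ->
  let c0 := INR (S k) / INR (S (S k)) in
  (r < c0 -> r ^ S (S k) < INR (S k) * mu) /\ (c0 < r -> INR (S k) * mu < r ^ S (S k)).
Proof.
  intros Hr P c0. unfold PP in P. pose proof (pow_lt r (S k) Hr).
  change (r ^ S (S k)) with (r * r ^ S k) in *.
  assert (mu = r ^ S k * (1 - r)) by lra. rewrite H0.
  assert (HM : 0 < INR (S k)) by (apply lt_0_INR; lia).
  unfold c0. rewrite (S_INR (S k)).
  split; intros Hc.
  - apply (Rmult_lt_compat_l (INR (S k) + 1)) in Hc; [|lra]. field_simplify in Hc; [|lra]. nra.
  - apply (Rmult_lt_compat_l (INR (S k) + 1)) in Hc; [|lra]. field_simplify in Hc; [|lra]. nra.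
Qed.

Lemma root_nz k mu r : 0 < mu ->
  mu < / INR (S (S k)) * ((INR (S (S k)) - 1) / INR (S (S k))) ^ S k ->
  0 < r -> PP k mu r = 0 -> r ^ S (S k) <> INR (S k) * mu.
Proof.
  intros Hmu Hb Hr P E. unfold PP in P. pose proof (pow_lt r (S k) Hr).
  change (r ^ S (S k)) with (r * r ^ S k) in *.
  assert (HM : 0 < INR (S k)) by (apply lt_0_INR; lia).
  rewrite (S_INR (S k)) in Hb. replace (INR (S k) + 1 - 1) with (INR (S k)) in Hb by ring.
  assert (E2 : r ^ S k = (INR (S k) + 1) * mu) by lra.
  assert (Er : r = INR (S k) / (INR (S k) + 1)).
  { rewrite E2 in E. assert (r * (INR (S k) + 1) = INR (S k)).
    { apply (Rmult_eq_reg_r mu); [|lra]. lra. }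
    apply (Rmult_eq_reg_r (INR (S k) + 1)); [|lra]. rewrite H0. field. lra. }
  rewrite <- Er in Hb. rewrite E2 in Hb.
  replace (/ (INR (S k) + 1) * ((INR (S k) + 1) * mu)) with mu in Hb by (field; lra). lra.
Qed.

Lemma HU_lem k mu y s : 0 < y -> 0 < s -> mu = y ^ S k / s - y ^ S (S k) -> s = / UU k mu y.
Proof.
  intros Hy Hs E. unfold UU. rewrite E. pose proof (pow_lt y k Hy). cbn [pow].
  field. split; [lra|]. split; [lra|]. split; [lra|].
  replace (y * y ^ k - y * (y * y ^ k) * s + y * (s * (y * y ^ k))) with (y * y ^ k) by ring.
  apply Rmult_integral_contrapositive_currified; lra.
Qed.


Lemma PP_UU k mu y : 0 < y -> PP k mu y = y ^ S k * (UU k mu y - 1).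
Proof.
  intros Hy. unfold PP, UU. pose proof (pow_lt y k Hy). cbn [pow]. field. lra.
Qed.

Lemma Da_alg k mu y z : 0 <= mu -> 0 < y -> 1 + z ^ 2 = / UU k mu y ^ 2 ->
  1 * FF k mu y * (mu * / (y * y ^ k) + y) +
  z * (mu * (- (1 * z * (INR (S k) * y ^ k)) * / (y * y ^ k * (y * y ^ k))) + 1 * z) =
  INR (S k) * mu / y ^ S (S k) - 1.
Proof.
  intros Hm Hy Hz. pose proof (pow_lt y k Hy). pose proof (UU_pos k mu y Hm Hy).
  replace (z * (mu * (- (1 * z * (INR (S k) * y ^ k)) * / (y * y ^ k * (y * y ^ k))) + 1 * z))
    with ((z ^ 2) * (1 - mu * INR (S k) / (y * (y * y ^ k)))) by (field; lra).
  replace (z ^ 2) with (/ UU k mu y ^ 2 - 1) by lra.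
  unfold FF. unfold UU in *. cbn [pow]. field. split; [lra|]. split; [lra|].
  cbn [pow] in H0. unfold Rdiv in H0. 
  assert (0 < mu + y * (y * y ^ k)).
  { assert (0 < y * (y * y ^ k)) by (repeat apply Rmult_lt_0_compat; lra). lra. }
  lra.
Qed.

Lemma G_deriv k mu c (g : R -> R) x g1 : 0 < g x -> is_derive g x g1 ->
  is_derive (fun y => (c / g y ^ S (S k) - 1) * (mu + g y ^ S (S k))) x
    (- INR (S (S k)) * g1 * (c * mu / g x ^ S (S (S k)) + g x ^ S k)).
Proof.
  intros Hg Hd.
  pose proof (pow_lt (g x) k Hg).
  auto_derive.
  - split; [exists g1; exact Hd|]. split; [|split; [exists g1; exact Hd|exact I]].
    cbn [pow]. repeat apply Rmult_integral_contrapositive_currified; lra.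
  - replace (Derive (fun x : R => g x) x) with g1 by (symmetry; apply is_derive_unique; exact Hd).
    prep k. set (X := g x ^ k) in *. field. split; lra.
Qed.

Lemma jac_alg k mu y z : 0 <= mu -> 0 < y ->
  - (- INR (S (S k)) * z * (INR (S k) * mu * mu / y ^ S (S (S k)) + y ^ S k)) / (y ^ S k * / UU k mu y)
  - INR (S (S k)) * (1 + (INR (S (S k)) - 1) * mu ^ 2 / y ^ (2 * S (S k))) * (z / / UU k mu y) = 0.
Proof.
  intros Hm Hy. pose proof (UU_pos k mu y Hm Hy). pose proof (pow_lt y k Hy).
  replace (2 * S (S k))%nat with (S (S k) + S (S k))%nat by lia. rewrite pow_add.
  unfold UU in *. cbn [pow] in *. rewrite !S_INR. field.
  split; [lra|]. split; [lra|]. unfold Rdiv in H.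
  assert (0 < y * y ^ k) by (apply Rmult_lt_0_compat; lra).
  assert (0 < mu + y * (y * y ^ k)).
  { assert (0 < y * (y * y ^ k)) by (repeat apply Rmult_lt_0_compat; lra). lra. }
  lra.
Qed.

Lemma UU_mul k mu y : 0 < y -> y ^ S k * UU k mu y = mu + y ^ S (S k).
Proof.
  intros Hy. pose proof (pow_lt y k Hy). unfold UU. cbn [pow]. field. lra.
Qed.
Theorem lemma3p2 (n : nat) (mu : R) (f : R -> R) (am T : R)
  (Hn : (2 <= n)%nat)
  (Hmu : 0 < mu < / INR n * ((INR n - 1) / INR n) ^ (n - 1))
  (Hsmooth : forall (k : nat) (x : R), ex_derive_n f k x)
  (Hpos : forall x, 0 < f x)
  (Hnonconst : exists x y, f x <> f y)
  (Hode : delaunay_ode n mu f)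
  (Ham : is_a_minus n mu am)
  (Hf0 : f 0 = am)
  (HT : 0 < T)
  (Hper : forall x, f (x + T) = f x)
  (HTmin : f T = am /\ forall t, 0 < t < T -> am < f t) :
  (forall x, lap_rad n f (a_fun f) x - V_pot n mu f x * a_fun f x = 0) /\
  (forall x, a_fun f x = 0 <-> exists k : Z, x = IZR k * T / 2) /\
  (exists z1 z2,
      0 < z1 < T / 2 /\ T / 2 < z2 < T /\
      Derive (a_fun f) z1 = 0 /\ Derive (a_fun f) z2 = 0 /\
      (forall z, 0 <= z <= T -> Derive (a_fun f) z = 0 -> z = z1 \/ z = z2)).
Proof.
  destruct n as [|[|k]]; [lia|lia|].
  replace (S (S k) - 1)%nat with (S k) in * by lia.
  unfold delaunay_ode, is_a_minus, lap_rad, V_pot in *.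
  replace (S (S k) - 1)%nat with (S k) in * by lia.
  destruct Ham as [Ham0 [HamP _]].
  destruct HTmin as [HfT Hmin].
  destruct Hmu as [Hmu0 Hmu1].
  set (f1 := Derive f). set (f2 := Derive f1).
  assert (D1 : forall x, is_derive f x (f1 x)).
  { intros x. apply Derive_correct. exact (Hsmooth 1%nat x). }
  assert (D2 : forall x, is_derive f1 x (f2 x)).
  { intros x. apply Derive_correct. exact (Hsmooth 2%nat x). }
  assert (D3 : forall x, ex_derive f2 x).
  { intros x. exact (Hsmooth 3%nat x). }
  set (c := INR (S k) * mu).
  assert (HS : forall x, 0 < sqrt (1 + f1 x ^ 2)).
  { intros x. apply sqrt_lt_R0. pose proof (pow2_ge_0 (f1 x)). lra. }
  assert (HU : forall x, sqrt (1 + f1 x ^ 2) = / UU k mu (f x)).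
  { intros x. apply HU_lem; [apply Hpos|apply HS|apply Hode]. }
  assert (H1sq : forall x, 1 + f1 x ^ 2 = / UU k mu (f x) ^ 2).
  { intros x. rewrite <- pow_inv, <- HU. rewrite pow2_sqrt; [ring|].
    pose proof (pow2_ge_0 (f1 x)). lra. }
  assert (HUpos : forall x, 0 < UU k mu (f x)).
  { intros x. apply UU_pos; [lra|apply Hpos]. }
  assert (Hmain : forall x, f1 x * (f2 x - FF k mu (f x)) = 0).
  { intros x.
    assert (L1 : is_derive (fun x => 1 + f1 x ^ 2) x (2 * f1 x * f2 x)).
    { auto_derive. exists (f2 x); apply D2.
      replace (Derive (fun x : R => f1 x) x) with (f2 x) by (symmetry; apply is_derive_unique; apply D2).
      ring. }
    assert (L2 : is_derive (fun x => 1 + f1 x ^ 2) x (scal (f1 x) (2 * FF k mu (f x)))).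
    { apply (is_derive_ext (fun x => / UU k mu (f x) ^ 2)).
      - intros t. rewrite H1sq. reflexivity.
      - apply (is_derive_comp (fun y => / UU k mu y ^ 2) f). apply d_invU2; [lra|apply Hpos]. apply D1. }
    pose proof (is_derive_unique _ _ _ L1). pose proof (is_derive_unique _ _ _ L2).
    rewrite H in H0. unfold scal in H0; simpl in H0; unfold mult in H0; simpl in H0. lra. }
  assert (Hroot : forall x, f1 x = 0 <-> PP k mu (f x) = 0).
  { intros x. specialize (H1sq x). specialize (HUpos x). pose proof (Hpos x).
    rewrite (PP_UU k mu (f x) H). pose proof (pow_lt (f x) (S k) H).
    split; intros E.
    - rewrite E in H1sq. assert (UU k mu (f x) ^ 2 = 1).
      { rewrite <- (Rinv_inv (UU k mu (f x) ^ 2)), <- H1sq. field. }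
      assert (UU k mu (f x) = 1) by nra. rewrite H2. ring.
    - assert (UU k mu (f x) = 1).
      { apply Rmult_integral in E. destruct E; lra. }
      rewrite H1 in H1sq. assert (f1 x ^ 2 = 0) by (field_simplify in H1sq; lra). nra. }
  assert (Dcont : forall x, continuous (fun x => f2 x - FF k mu (f x)) x).
  { intros x. apply (ex_derive_continuous (fun x => f2 x - FF k mu (f x))).
    auto_derive. repeat split; first [ apply D3 | (exists (f1 x); apply D1) | (exists (DFF k mu (f x)); apply d_FF; [lra|apply Hpos]) ]. }
  set (Dfun := fun x => f2 x - FF k mu (f x)) in Dcont.
  assert (Zc : forall x, Dfun x <> 0 -> f1 x = 0 /\ f2 x = 0).
  { intros x Hx.
    assert (Hloc : locally x (fun y => f1 y = 0)).
    { assert (ep : 0 < Rabs (Dfun x)) by (apply Rabs_pos_lt; auto).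
      pose proof (proj1 (filterlim_locally _ _) (Dcont x) (mkposreal _ ep)) as Hl.
      simpl in Hl. revert Hl. apply filter_imp. intros y Hy.
      change (Rabs (Dfun y - Dfun x) < Rabs (Dfun x)) in Hy.
      assert (Dfun y <> 0).
      { intros E. rewrite E in Hy. rewrite Rminus_0_l, Rabs_Ropp in Hy. lra. }
      pose proof (Hmain y). apply Rmult_integral in H0. destruct H0; auto. contradiction. }
    split. { apply (locally_singleton _ _ Hloc). }
    assert (is_derive f1 x 0).
    { apply (is_derive_ext_loc (fun _ => 0)). 
      - revert Hloc. apply filter_imp. intros y Hy. auto.
      - apply (is_derive_const 0). }
    rewrite <- (is_derive_unique _ _ _ H). symmetry. apply is_derive_unique. apply D2. }
  assert (Hconst : (forall x, f1 x = 0) -> forall p q, f p = f q).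
  { intros Z.
    assert (A1 : forall x y, x <= y -> f y <= f x).
    { apply (deriv_nonpos_decr f f1); auto. intros; rewrite Z; lra. }
    assert (A2 : forall x y, x <= y -> - f y <= - f x).
    { apply (deriv_nonpos_decr (fun x => - f x) (fun x => - f1 x)).
      - intros x. apply (is_derive_opp f). apply D1.
      - intros; rewrite Z; lra. }
    intros p q. destruct (Rle_or_lt p q) as [H|H].
    - specialize (A1 p q H). specialize (A2 p q H). lra.
    - specialize (A1 q p (Rlt_le _ _ H)). specialize (A2 q p (Rlt_le _ _ H)). lra. }
  assert (Hx1 : exists x1, f1 x1 <> 0).
  { destruct Hnonconst as [p [q Hpq]]. apply NNPP; intro Hn'. apply Hpq.
    apply Hconst. intros x; apply NNPP; intro; apply Hn'; exists x; auto. }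
  assert (Dc : continuity Dfun).
  { intros x. apply continuity_pt_filterlim. apply Dcont. }
  assert (Dval : forall x, Dfun x <> 0 ->
     PP k mu (f x) = 0 /\ Dfun x = 1 - c / f x ^ S (S k)).
  { intros x Hx. destruct (Zc x Hx) as [E1 E2]. apply Hroot in E1. split; auto.
    unfold Dfun. rewrite E2, root_FF; auto. unfold c. ring. }
  assert (LA : forall x, f2 x = FF k mu (f x)).
  { intros x0. destruct (Req_dec (Dfun x0) 0) as [E|Hne]; [unfold Dfun in E; lra|exfalso].
    destruct Hx1 as [x1 Hx1].
    assert (E1 : Dfun x1 = 0).
    { pose proof (Hmain x1). apply Rmult_integral in H. destruct H; [contradiction|exact H]. }
    set (d0 := Dfun x0) in *.
    destruct (IVT_gen Dfun x1 x0 (d0 / 2) Dc) as [x2 [_ E2]].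
    { rewrite E1. unfold Rmin, Rmax. fold d0. destruct (Rle_dec 0 d0); lra. }
    destruct (IVT_gen Dfun x1 x0 (d0 / 4) Dc) as [x3 [_ E3]].
    { rewrite E1. unfold Rmin, Rmax. fold d0. destruct (Rle_dec 0 d0); lra. }
    destruct (Dval x0 Hne) as [P0 V0].
    destruct (Dval x2 ltac:(lra)) as [P2 V2].
    destruct (Dval x3 ltac:(lra)) as [P3 V3].
    assert (f x0 <> f x2). { intros E. rewrite E in V0. fold d0 in V0. lra. }
    assert (f x0 <> f x3). { intros E. rewrite E in V0. fold d0 in V0. lra. }
    assert (f x2 <> f x3). { intros E. rewrite E in V2. lra. }
    pose proof (PP_roots k mu (f x0) (f x2) (Hpos _) (Hpos _) H P0 P2).
    pose proof (PP_roots k mu (f x0) (f x3) (Hpos _) (Hpos _) H0 P0 P3).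
    pose proof (PP_roots k mu (f x2) (f x3) (Hpos _) (Hpos _) H1 P2 P3).
    simpl in H2, H3, H4. lra. }
  assert (Da : forall x, is_derive (a_fun f) x (c / f x ^ S (S k) - 1)).
  { intros x. apply (is_derive_ext (fun x => f1 x * UU k mu (f x))).
    { intros t. unfold a_fun. fold f1. rewrite HU. unfold Rdiv. rewrite Rinv_inv. reflexivity. }
    unfold UU. auto_derive.
    - repeat split; first [ (exists (f2 x); apply D2) | (exists (f1 x); apply D1) | apply Rgt_not_eq; apply pow_lt; apply Hpos | idtac ].
      apply Rgt_not_eq; apply (pow_lt (f x) (S k)); apply Hpos.
    - replace (Derive (fun x : R => f1 x) x) with (FF k mu (f x)) by (rewrite <- LA; symmetry; apply is_derive_unique; apply D2).
      replace (Derive (fun x : R => f x) x) with (f1 x) by (symmetry; apply is_derive_unique; apply D1).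
      unfold c. apply Da_alg; [lra|apply Hpos|]. rewrite <- H1sq. reflexivity. }
  assert (DaE : forall x, Derive (a_fun f) x = c / f x ^ S (S k) - 1).
  { intros x. apply is_derive_unique. apply Da. }
  split.
  { intros x.
    assert (Ein : forall y, f y ^ S k * Derive (a_fun f) y / sqrt (1 + f1 y ^ 2)
                  = (c / f y ^ S (S k) - 1) * (mu + f y ^ S (S k))).
    { intros y. rewrite DaE. rewrite HU. rewrite <- (UU_mul k mu (f y) (Hpos y)).
      field. split; apply Rgt_not_eq; [apply pow_lt, Hpos|apply HUpos]. }
    rewrite (Derive_ext _ _ x Ein).
    assert (Eg : Derive (fun y : R => (c / f y ^ S (S k) - 1) * (mu + f y ^ S (S k))) x
       = - INR (S (S k)) * f1 x * (c * mu / f x ^ S (S (S k)) + f x ^ S k)).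
    { apply is_derive_unique. apply G_deriv; [apply Hpos|apply D1]. }
    rewrite Eg.
    unfold a_fun. fold f1. rewrite HU. unfold c.
    apply jac_alg; [lra|apply Hpos]. }
  assert (Hper1 : forall x, f1 (x + T) = f1 x).
  { intros x. assert (is_derive f x (f1 (x + T))).
    { apply (is_derive_ext (fun x => f (x + T))); [intros; apply Hper|].
      auto_derive. exists (f1 (x + T)); apply D1.
      replace (Derive (fun x : R => f x) (x + T)) with (f1 (x + T)) by (symmetry; apply is_derive_unique; apply D1).
      ring. }
    symmetry. apply (is_derive_unique f x (f1 (x + T)) H). }
  assert (perf : forall (j : Z) x, f (x + IZR j * T) = f x) by (apply per_Z; exact Hper).
  assert (perf1 : forall (j : Z) x, f1 (x + IZR j * T) = f1 x) by (apply per_Z; exact Hper1).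
  assert (fge : forall x, am <= f x).
  { intros x. destruct (floorT T x HT) as [j Hj].
    replace x with ((x - IZR j * T) + IZR j * T) by ring. rewrite perf.
    destruct (Req_dec (x - IZR j * T) 0) as [E|E].
    - rewrite E, Hf0. lra.
    - apply Rlt_le, Hmin. lra. }
  assert (flt1 : forall x, f x < 1).
  { intros x. specialize (H1sq x). specialize (HUpos x). pose proof (pow2_ge_0 (f1 x)).
    assert (UU k mu (f x) <= 1).
    { destruct (Rle_or_lt (UU k mu (f x)) 1) as [Hl|Hl]; auto.
      assert (1 < UU k mu (f x) ^ 2) by nra.
      assert (/ UU k mu (f x) ^ 2 < 1).
      { rewrite <- Rinv_1. apply Rinv_lt_contravar; lra. }
      lra. }
    unfold UU in H0. pose proof (pow_lt (f x) (S k) (Hpos x)).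
    assert (0 < mu / f x ^ S k) by (apply Rdiv_lt_0_compat; lra). lra. }
  destruct (FF_lip k mu am 1 ltac:(lra) Ham0 ltac:(pose proof (fge 0); pose proof (flt1 0); lra)) as [L [HL Hlip]].
  assert (refl : forall c0 x0, f (c0 - x0) = f x0 -> f1 (c0 - x0) = - f1 x0 ->
                  forall u, f (c0 - u) = f u).
  { intros c0 x0 E0 E1.
    assert (Dy : forall u, is_derive (fun u => f (c0 - u)) u (- f1 (c0 - u))).
    { intros u. auto_derive. exists (f1 (c0 - u)); apply D1.
      change (c0 + - u) with (c0 - u).
      replace (Derive (fun x : R => f x) (c0 - u)) with (f1 (c0 - u)) by (symmetry; apply is_derive_unique; apply D1).
      ring. }
    assert (DEy : forall u, Derive (fun u => f (c0 - u)) u = - f1 (c0 - u)).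
    { intros u. apply is_derive_unique. apply Dy. }
    apply (energy_uniq (FF k mu) L (fun u => f (c0 - u)) f x0 HL).
    - intros x. apply Hlip; split; try apply fge; apply Rlt_le, flt1.
    - intros x. rewrite DEy. apply Dy.
    - intros x. apply (is_derive_ext (fun u => - f1 (c0 - u))).
      { intros t. rewrite DEy. reflexivity. }
      auto_derive. exists (f2 (c0 - x)); apply D2.
      change (c0 + - x) with (c0 - x).
      replace (Derive (fun x : R => f1 x) (c0 - x)) with (f2 (c0 - x)) by (symmetry; apply is_derive_unique; apply D2).
      rewrite LA. ring.
    - intros x. apply D1.
    - intros x. rewrite <- LA. apply D2.
    - exact E0.
    - rewrite DEy, E1, Ropp_involutive. reflexivity. }
  assert (f1_0 : f1 0 = 0) by (apply Hroot; rewrite Hf0; exact HamP).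
  assert (f1_T : f1 T = 0) by (apply Hroot; rewrite HfT; exact HamP).
  assert (sym : forall u, f (T - u) = f u).
  { apply (refl T 0).
    - rewrite Rminus_0_r, HfT, Hf0. reflexivity.
    - rewrite Rminus_0_r, f1_T, f1_0. ring. }
  assert (sym1 : forall u, f1 u = - f1 (T - u)).
  { intros u. assert (is_derive f u (- f1 (T - u))).
    { apply (is_derive_ext (fun u => f (T - u))); [intros; apply sym|].
      auto_derive. exists (f1 (T - u)); apply D1.
      change (T + - u) with (T - u).
      replace (Derive (fun x : R => f x) (T - u)) with (f1 (T - u)) by (symmetry; apply is_derive_unique; apply D1).
      ring. }
    rewrite <- (is_derive_unique _ _ _ H). reflexivity. }
  assert (f1_h : f1 (T / 2) = 0).
  { pose proof (sym1 (T / 2)). replace (T - T / 2) with (T / 2) in H by field. lra. }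
  assert (nz : forall x, 0 < x < T / 2 -> f1 x <> 0).
  { intros x Hx E.
    assert (forall u, f (2 * x - u) = f u).
    { apply (refl (2 * x) x).
      - f_equal; ring.
      - replace (2 * x - x) with x by ring. rewrite E. ring. }
    specialize (H 0). rewrite Rminus_0_r, Hf0 in H. specialize (Hmin (2 * x) ltac:(lra)). lra. }
  assert (f1c : continuity f1).
  { intros x. apply continuity_pt_filterlim. apply (ex_derive_continuous f1). exists (f2 x). apply D2. }
  assert (pos : forall x, 0 < x < T / 2 -> 0 < f1 x).
  { destruct (MVT_cor2 f f1 0 (T / 2) ltac:(lra)) as [c1 [Hc1 Hc2]].
    { intros t _. apply is_derive_Reals. apply D1. }
    assert (0 < f1 c1).
    { specialize (Hmin (T / 2) ltac:(lra)). rewrite Hf0 in Hc1.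
      destruct (Rle_or_lt (f1 c1) 0); auto. assert (f1 c1 * (T / 2 - 0) <= 0) by (apply Rmult_le_0_r; lra). lra. }
    intros x Hx. destruct (Rle_or_lt (f1 x) 0) as [Hl|Hl]; auto. exfalso.
    destruct (IVT_gen f1 c1 x 0 f1c) as [x' [Hx' Ex']].
    { unfold Rmin, Rmax. destruct (Rle_dec (f1 c1) (f1 x)); lra. }
    apply (nz x'); auto.
    unfold Rmin, Rmax in Hx'. destruct (Rle_dec c1 x); lra. }
  assert (incr : forall x y, 0 <= x -> x < y -> y <= T / 2 -> f x < f y).
  { apply (deriv_incr_strict f f1 0 (T / 2)); [intros; apply D1|exact pos]. }
  assert (aE : forall x, a_fun f x = f1 x * UU k mu (f x)).
  { intros x. unfold a_fun. fold f1. rewrite HU. unfold Rdiv. rewrite Rinv_inv. reflexivity. }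
  split.
  { intros x. rewrite aE. split.
    - intros E. assert (E1 : f1 x = 0).
      { apply Rmult_integral in E. destruct E as [E|E]; auto. specialize (HUpos x). lra. }
      destruct (floorT T x HT) as [j Hj].
      set (r := x - IZR j * T).
      assert (Er : f1 r = 0) by (rewrite <- E1; unfold r; rewrite <- (perf1 j (x - IZR j * T)); f_equal; ring).
      destruct (Req_dec r 0) as [R0|R0].
      + exists (2 * j)%Z. rewrite mult_IZR. unfold r in R0. field_simplify. lra.
      + destruct (Req_dec r (T / 2)) as [R1|R1].
        * exists (2 * j + 1)%Z. rewrite plus_IZR, mult_IZR. unfold r in R1. field_simplify. lra.
        * exfalso. destruct (Rlt_or_le r (T / 2)) as [R2|R2].
          -- apply (nz r); auto. unfold r in *; lra.
          -- pose proof (sym1 r). pose proof (pos (T - r) ltac:(unfold r in *; lra)). lra.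
    - intros [kk Hk]. assert (f1 x = 0); [|rewrite H; ring].
      rewrite (Z.div2_odd kk) in Hk. rewrite plus_IZR, mult_IZR in Hk.
      destruct (Z.odd kk); simpl Z.b2z in Hk.
      + replace x with (T / 2 + IZR (Z.div2 kk) * T) by (rewrite Hk; field). rewrite perf1. exact f1_h.
      + replace x with (0 + IZR (Z.div2 kk) * T) by (rewrite Hk; field). rewrite perf1. exact f1_0. }
  assert (PPh : PP k mu (f (T / 2)) = 0) by (apply Hroot; exact f1_h).
  assert (amh : am < f (T / 2)) by (apply Hmin; lra).
  assert (HP0 : PP k mu am = 0) by exact HamP.
  destruct (PP_roots k mu am (f (T / 2)) Ham0 (Hpos _) ltac:(lra) HP0 PPh) as [Hc|Hc]; [|lra].
  destruct (root_cmp k mu am Ham0 HP0) as [Ca _].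
  destruct (root_cmp k mu (f (T / 2)) (Hpos _) PPh) as [_ Cb].
  specialize (Ca (proj1 Hc)). specialize (Cb (proj2 Hc)). fold c in Ca, Cb.
  assert (pc : continuity (fun x => f x ^ S (S k))).
  { intros x. apply continuity_pt_filterlim. apply (ex_derive_continuous (fun x => f x ^ S (S k))).
    auto_derive. exists (f1 x); apply D1. }
  destruct (IVT_gen (fun x => f x ^ S (S k)) 0 (T / 2) c pc) as [z1 [Hz1 Ez1]].
  { rewrite Hf0. unfold Rmin, Rmax. destruct (Rle_dec (am ^ S (S k)) (f (T / 2) ^ S (S k))); lra. }
  assert (Hmin2 : Rmin 0 (T / 2) = 0) by (unfold Rmin; destruct (Rle_dec 0 (T / 2)); lra).
  assert (Hmax2 : Rmax 0 (T / 2) = T / 2) by (unfold Rmax; destruct (Rle_dec 0 (T / 2)); lra).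
  rewrite Hmin2, Hmax2 in Hz1. cbv beta in Ez1.
  assert (z1ne0 : z1 <> 0) by (intros E; rewrite E, Hf0 in Ez1; lra).
  assert (z1neh : z1 <> T / 2) by (intros E; rewrite E in Ez1; lra).
  assert (eqz : forall z, 0 <= z <= T / 2 -> f z ^ S (S k) = c -> z = z1).
  { intros z Hz Ez. destruct (Rtotal_order z z1) as [H|[H|H]]; auto; exfalso.
    - pose proof (incr z z1 (proj1 Hz) H ltac:(lra)).
      pose proof (pow_lt_l (f z) (f z1) (S k) (Rlt_le _ _ (Hpos z)) H0). lra.
    - pose proof (incr z1 z (proj1 Hz1) H ltac:(lra)).
      pose proof (pow_lt_l (f z1) (f z) (S k) (Rlt_le _ _ (Hpos z1)) H0). lra. }
  exists z1, (T - z1).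
  split; [lra|]. split; [lra|].
  split; [rewrite DaE, Ez1; unfold c; field; repeat split; first [lra | apply not_0_INR; lia]|].
  split; [rewrite DaE, sym, Ez1; unfold c; field; repeat split; first [lra | apply not_0_INR; lia]|].
  intros z Hz Ez. rewrite DaE in Ez.
  assert (Ez' : f z ^ S (S k) = c).
  { pose proof (pow_lt (f z) (S (S k)) (Hpos z)).
    apply (Rmult_eq_reg_r (/ f z ^ S (S k))); [|apply Rinv_neq_0_compat; lra].
    rewrite Rinv_r by lra. unfold Rdiv in Ez. lra. }
  destruct (Rle_or_lt z (T / 2)) as [Hl|Hl].
  - left. apply eqz; auto. lra.
  - right. assert (T - z = z1). { apply eqz; [lra|]. rewrite sym. exact Ez'. } lra.
Qed.
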